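(* Let $A=(a_{ij})\in\mathbb{R}_{\max}^{2\times 2}$ with $\lambda(A)\ne-\infty$ and $g(\mathrm{crit}(A))=2$. Then $T_1(A)=\mathrm{DM}(2,2)=2$ if and only if $a_{11}\ne a_{22}$.
   Context: Max-plus semiring $\mathbb{R}_{\max}=\mathbb{R}\cup\{-\infty\}$ with $a\oplus b=\max(a,b)$, $a\otimes b=a+b$; $(AB)_{ij}=\max_k(a_{ik}+b_{kj})$; $A^t$ is the $t$-th max-plus power, $A^0=I$. $\mathcal{D}(A)$ is the digraph with arc $(i,j)$ of weight $a_{ij}$ whenever $a_{ij}\ne-\infty$; cycles, their length and weight as usual. $\lambda(A)$ is the maximal cycle mean. $\mathrm{crit}(A)$ is the subgraph of all nodes and arcs of cycles attaining $\lambda(A)$; its nodes are critical. $g(\mathrm{crit}(A))$ is the maximum over strongly connected components of $\mathrm{crit}(A)$ of their minimal cycle length. The cyclicity of $\mathrm{crit}(A)$ is the lcm over components of the gcd of their cycle lengths. CSR terms: with $\lambda=\lambda(A)$, $\gamma$ the cyclicity of $\mathrm{crit}(A)$, $A_\lambda$ equal to $A$ with $\lambda$ subtracted from every finite entry, $M=I\oplus N\oplus\dots\oplus N^{n-1}$ where $N=A_\lambda^\gamma$: $c_{ij}=m_{ij}$ if $j$ critical, else $-\infty$; $r_{ij}=m_{ij}$ if $i$ critical, else $-\infty$; $s_{ij}=a_{ij}$ if $(i,j)$ is an arc of $\mathrm{crit}(A)$, else $-\infty$; $CS^tR[A]$ is the product $CS^tR$. $B_N$ has $(B_N)_{ij}=-\infty$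 if $i$ or $j$ is critical and $a_{ij}$ otherwise. $T_1(A)$ is the least $T\ge0$ with $A^t=CS^tR[A]\oplus B_N^t$ for all $t\ge T$. $\mathrm{DM}(g,n)=g(n-2)+n$. *)

(* Defs.v *)
(* Max-plus semiring R_max = R ∪ {-oo} modelled as option R
   (None = -oo), over an arbitrary real field R (the paper uses the reals). *)
From HB Require Import structures.
From mathcomp Require Import all_boot all_order all_algebra.
Set Implicit Arguments. Unset Strict Implicit. Unset Printing Implicit Defensive.
Import Order.TTheory GRing.Theory Num.Theory.
Local Open Scope ring_scope.

Section MaxPlus.
Variable R : realFieldType.

Definition mp := option R.

Definition mpadd (a b : mp) : mp :=
  match a, b with
  | Some x, Some y => Some (Num.max x y)
  | Some x, None => Some x
  | None, b => b
  end.

Definition mpmul (a b : mp) : mp :=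
  match a, b with
  | Some x, Some y => Some (x + y)
  | _, _ => None
  end.

Definition mpmx (n : nat) := 'I_n -> 'I_n -> mp.

Definition mpI n : mpmx n := fun i j => if i == j then Some 0 else None.

Definition mpmxadd n (A B : mpmx n) : mpmx n := fun i j => mpadd (A i j) (B i j).

Definition mpmxmul n (A B : mpmx n) : mpmx n :=
  fun i j => \big[mpadd/None]_(k < n) mpmul (A i k) (B k j).

Definition mpmxpow n (A : mpmx n) (t : nat) : mpmx n := iter t (mpmxmul A) (@mpI n).

(* Cycles of D(A): elementary cycles i_0 -> i_1 -> ... -> i_k -> i_0,
   given as a uniq (k+1)-tuple of nodes; arc m goes from c_m to c_(m+1 mod k+1). *)
Definition cycle_weight n (A : mpmx n) k (c : (k.+1).-tuple 'I_n) : mp :=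
  \big[mpmul/Some 0]_(m < k.+1) A (tnth c m) (tnth c (ordS m)).

(* cycle mean; None when c is not a cycle of D(A) (some arc is -oo) *)
Definition cycle_mean n (A : mpmx n) k (c : (k.+1).-tuple 'I_n) : mp :=
  match cycle_weight A c with
  | Some w => Some (w / (k.+1)%:R)
  | None => None
  end.

Definition is_cycle n (A : mpmx n) k (c : (k.+1).-tuple 'I_n) : bool :=
  uniq c && (cycle_weight A c != None).

(* maximal cycle mean lambda(A) (= -oo if D(A) is acyclic) *)
Definition mcm n (A : mpmx n) : mp :=
  \big[mpadd/None]_(k < n)
    \big[mpadd/None]_(c : (k.+1).-tuple 'I_n | uniq c) cycle_mean A c.

Definition critical_cycle n (A : mpmx n) k (c : (k.+1).-tuple 'I_n) : bool :=
  is_cycle A c && (cycle_mean A c == mcm A).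

Definition crit_arc n (A : mpmx n) (i j : 'I_n) : bool :=
  [exists k : 'I_n, [exists c : (k.+1).-tuple 'I_n,
     critical_cycle A c && [exists m : 'I_k.+1, (tnth c m == i) && (tnth c (ordS m) == j)]]].

Definition crit_node n (A : mpmx n) (i : 'I_n) : bool :=
  [exists k : 'I_n, [exists c : (k.+1).-tuple 'I_n,
     critical_cycle A c && (i \in c)]].

Definition crit_scc n (A : mpmx n) (i j : 'I_n) : bool :=
  [&& crit_node A i, crit_node A j, connect (crit_arc A) i j & connect (crit_arc A) j i].

Definition crit_graph_cycle n (A : mpmx n) k (c : (k.+1).-tuple 'I_n) : bool :=
  uniq c && [forall m : 'I_k.+1, crit_arc A (tnth c m) (tnth c (ordS m))].

Definition comp_has_cycle_len n (A : mpmx n) (i : 'I_n) (k : 'I_n) : bool :=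
  [exists c : (k.+1).-tuple 'I_n,
     crit_graph_cycle A c && [exists m : 'I_k.+1, crit_scc A i (tnth c m)]].

(* minimal cycle length of the component of i (the default n.+1 is never
   reached for critical i) *)
Definition comp_girth n (A : mpmx n) (i : 'I_n) : nat :=
  \big[minn/n.+1]_(k < n | comp_has_cycle_len A i k) k.+1.

Definition comp_cyclicity n (A : mpmx n) (i : 'I_n) : nat :=
  \big[gcdn/0]_(k < n | comp_has_cycle_len A i k) k.+1.

Definition crit_girth n (A : mpmx n) : nat :=
  \max_(i < n | crit_node A i) comp_girth A i.

Definition crit_cyclicity n (A : mpmx n) : nat :=
  \big[lcmn/1]_(i < n | crit_node A i) comp_cyclicity A i.

Definition mp_normalize n (A : mpmx n) : mpmx n :=
  fun i j => match A i j, mcm A with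
             | Some x, Some l => Some (x - l)
             | a, _ => a
             end.

Definition csr_N n (A : mpmx n) : mpmx n :=
  mpmxpow (mp_normalize A) (crit_cyclicity A).

Definition csr_M n (A : mpmx n) : mpmx n :=
  fun i j => \big[mpadd/None]_(k < n) mpmxpow (csr_N A) k i j.

Definition csr_C n (A : mpmx n) : mpmx n :=
  fun i j => if crit_node A j then csr_M A i j else None.

Definition csr_R n (A : mpmx n) : mpmx n :=
  fun i j => if crit_node A i then csr_M A i j else None.

Definition csr_S n (A : mpmx n) : mpmx n :=
  fun i j => if crit_arc A i j then A i j else None.

Definition CSR n (A : mpmx n) (t : nat) : mpmx n :=
  mpmxmul (mpmxmul (csr_C A) (mpmxpow (csr_S A) t)) (csr_R A).

Definition csr_B n (A : mpmx n) : mpmx n :=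
  fun i j => if crit_node A i || crit_node A j then None else A i j.

Definition csr_holds_at n (A : mpmx n) (t : nat) : Prop :=
  mpmxpow A t = mpmxadd (CSR A t) (mpmxpow (csr_B A) t).

Definition is_T1 n (A : mpmx n) (T : nat) : Prop :=
  (forall t, (T <= t)%N -> csr_holds_at A t) /\
  (forall T', (forall t, (T' <= t)%N -> csr_holds_at A t) -> (T <= T')%N).

End MaxPlus.

Definition DM (g n : nat) : nat := (g * (n - 2) + n)%N.

(* Main.v *)
Require Import Defs.
From HB Require Import structures.
From mathcomp Require Import all_boot all_order all_algebra.
From mathcomp Require Import ring lra zify.
From Stdlib Require Import FunctionalExtensionality.
Set Implicit Arguments. Unset Strict Implicit. Unset Printing Implicit Defensive.
Import Order.TTheory GRing.Theory Num.Theory.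
Local Open Scope ring_scope.

Lemma mpaddA (R : realFieldType) : associative (@mpadd R).
Proof. by case=> [x|] [y|] [z|] //=; rewrite maxA. Qed.
Lemma mpaddC (R : realFieldType) : commutative (@mpadd R).
Proof. by case=> [x|] [y|] //=; rewrite maxC. Qed.
Lemma mpadd0 (R : realFieldType) : left_id None (@mpadd R).
Proof. by case. Qed.
HB.instance Definition _ (R : realFieldType) :=
  Monoid.isComLaw.Build (mp R) None (@mpadd R) (@mpaddA R) (@mpaddC R) (@mpadd0 R).

Lemma mpaddn (R : realFieldType) (x : mp R) : mpadd x None = x.
Proof. by case: x. Qed.
Lemma mpaddxx (R : realFieldType) (x : mp R) : mpadd x x = x.
Proof. by case: x => //= x; rewrite maxxx. Qed.

Lemma big_ub (R : realFieldType) (I : finType) (P : pred I) (F : I -> mp R) i :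
  P i -> mpadd (F i) (\big[@mpadd R/None]_(j | P j) F j) = \big[@mpadd R/None]_(j | P j) F j.
Proof. by move=> Pi; rewrite (bigD1 i) //= mpaddA mpaddxx. Qed.

Lemma ord2P (i : 'I_2) : i = ord0 \/ i = ord_max.
Proof. by case: i => [[|[|]]] // Hi; [left|right]; apply: val_inj. Qed.

Lemma big2 (R : realFieldType) (F : 'I_2 -> mp R) :
  \big[@mpadd R/None]_(k < 2) F k = mpadd (F ord0) (F ord_max).
Proof.
rewrite !big_ord_recr big_ord0 /=.
by congr (mpadd (F _) _); apply: val_inj.
Qed.

Definition mk2 (R : realFieldType) (x y z w : mp R) : mpmx R 2 :=
  fun i j => if i == ord0 then (if j == ord0 then x else y) else (if j == ord0 then z else w).

Lemma mk2E (R : realFieldType) (A : mpmx R 2) :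
  A = mk2 (A ord0 ord0) (A ord0 ord_max) (A ord_max ord0) (A ord_max ord_max).
Proof.
apply: functional_extensionality => i; apply: functional_extensionality => j.
by case: (ord2P i) => ->; case: (ord2P j) => ->.
Qed.

Lemma mul2 (R : realFieldType) (x y z w x' y' z' w' : mp R) :
  mpmxmul (mk2 x y z w) (mk2 x' y' z' w') =
  mk2 (mpadd (mpmul x x') (mpmul y z')) (mpadd (mpmul x y') (mpmul y w'))
      (mpadd (mpmul z x') (mpmul w z')) (mpadd (mpmul z y') (mpmul w w')).
Proof.
apply: functional_extensionality => i; apply: functional_extensionality => j.
rewrite /mpmxmul big2 /mk2.
by case: (ord2P i) => ->; case: (ord2P j) => ->.
Qed.

Lemma I2 (R : realFieldType) : @mpI R 2 = mk2 (Some 0) None None (Some 0).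
Proof. by rewrite [LHS]mk2E. Qed.

Ltac elim_max := repeat match goal with |- context [Order.max ?x ?y] =>
  lazymatch x with context [Order.max _ _] => fail | _ =>
  lazymatch y with context [Order.max _ _] => fail | _ =>
  rewrite (maxEle x y); case: (leP x y) => ? /= end end end.

Lemma opt_bound (R : realFieldType) (a : mp R) (l : R) :
  (forall x, a = Some x -> x < l) -> if a is Some x then x < l else true.
Proof. by case: a => // x /(_ x erefl). Qed.

Definition Sform (R : realFieldType) (b0 c0 l : R) (o : bool) (e : R) : mpmx R 2 :=
  if o then mk2 None (Some (b0+e-l)) (Some (c0+e-l)) None
  else mk2 (Some e) None None (Some e).
Definition Aform (R : realFieldType) (a d : mp R) (b0 c0 l : R) (o : bool) (e : R) : mpmx R 2 :=
  if o then mk2 (mpmul (mpadd a d) (Some (e-l))) (Some (b0+e-l)) (Some (c0+e-l))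
              (mpmul (mpadd a d) (Some (e-l)))
  else mk2 (Some e) (mpmul (mpadd a d) (Some (b0+e-l-l)))
           (mpmul (mpadd a d) (Some (c0+e-l-l))) (Some e).
Definition An (R : realFieldType) (a d : mp R) (b0 c0 l : R) :=
  mk2 (mpmul a (Some (-l))) (Some (b0 - l)) (Some (c0 - l)) (mpmul d (Some (-l))).

Ltac solve_mp a d ha hd :=
  rewrite /Aform /Sform /An ?I2 ?mul2; congr mk2;
  have := opt_bound ha; have := opt_bound hd; clear ha hd;
  case: a => [?|]; case: d => [?|] => /= ? ?;
  elim_max; try done; congr Some; lra.

Section Forms.
Context (R : realFieldType) (a d : mp R) (b0 c0 l : R).
Local Notation Am := (mk2 a (Some b0) (Some c0) d).
Local Notation Sm := (mk2 None (Some b0) (Some c0) None).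
Local Notation AF := (Aform a d b0 c0 l).
Local Notation SF := (Sform b0 c0 l).

Lemma L1 (hbc : b0 + c0 = l + l) (ha : forall x, a = Some x -> x < l)
  (hd : forall x, d = Some x -> x < l) o e :
  mpmxmul Am (AF o e) = AF (~~o) (e + l).
Proof. case: o; solve_mp a d ha hd. Qed.

Lemma L2 (hbc : b0 + c0 = l + l) o e : mpmxmul Sm (SF o e) = SF (~~o) (e + l).
Proof. case: o; rewrite /Sform ?mul2; congr mk2 => /=; try done; congr Some; lra. Qed.

Lemma L3 (hbc : b0 + c0 = l + l) (ha : forall x, a = Some x -> x < l)
  (hd : forall x, d = Some x -> x < l) o e :
  mpmxmul (mpmxmul (AF false 0) (SF o e)) (AF false 0) = AF o e.
Proof. case: o; solve_mp a d ha hd. Qed.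

Lemma L4 (hbc : b0 + c0 = l + l) (ha : forall x, a = Some x -> x < l)
  (hd : forall x, d = Some x -> x < l) :
  mpmxmul (An a d b0 c0 l) (mpmxmul (An a d b0 c0 l) (@mpI R 2)) = AF false 0.
Proof. solve_mp a d ha hd. Qed.

Lemma L5 (hbc : b0 + c0 = l + l) (ha : forall x, a = Some x -> x < l)
  (hd : forall x, d = Some x -> x < l) :
  mpmxmul Am (mpmxmul Am (@mpI R 2)) = AF false (l + l).
Proof. solve_mp a d ha hd. Qed.

End Forms.

Lemma big2c (T : Type) (idx : T) (op : T -> T -> T) (P : pred 'I_2) F :
   \big[op/idx]_(i<2 | P i) F i = (if P ord0 then op (F ord0) else id) ((if P ord_max then op (F ord_max) else id) idx).
Proof.
have -> : index_enum 'I_2 = [:: ord0; ord_max].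
  apply: (inj_map val_inj). by rewrite /index_enum -enumT /= val_enum_ord.
rewrite big_cons big_cons big_nil.
by case: (P ord0); case: (P ord_max).
Qed.

Lemma big1c (T : Type) (idx : T) (op : T -> T -> T) (P : pred 'I_1) F :
   \big[op/idx]_(i<1 | P i) F i = (if P ord0 then op (F ord0) else id) idx.
Proof.
have -> : index_enum 'I_1 = [:: ord0].
  apply: (inj_map val_inj). by rewrite /index_enum -enumT /= val_enum_ord.
by rewrite big_cons big_nil; case: (P ord0).
Qed.

Lemma ordS20 : ordS (ord0 : 'I_2) = ord_max. Proof. exact: val_inj. Qed.
Lemma ordS21 : ordS (ord_max : 'I_2) = ord0. Proof. exact: val_inj. Qed.
Lemma ordS1 (m : 'I_1) : ordS m = m. Proof. by rewrite (ord1 m); apply: val_inj. Qed.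

Lemma mpmul1 (R : realFieldType) (x : mp R) : mpmul x (Some 0) = x.
Proof. by case: x => //= x; rewrite addr0. Qed.

Lemma cw2 (R : realFieldType) (A : mpmx R 2) (c : 2.-tuple 'I_2) :
  cycle_weight A c = mpmul (A (tnth c ord0) (tnth c ord_max)) (A (tnth c ord_max) (tnth c ord0)).
Proof.
rewrite /cycle_weight big2c /= ordS20 ordS21 mpmul1.
by case: (A _ _) => // x; case: (A _ _).
Qed.

Lemma cw1 (R : realFieldType) (A : mpmx R 2) (c : 1.-tuple 'I_2) :
  cycle_weight A c = A (tnth c ord0) (tnth c ord0).
Proof. by rewrite /cycle_weight big1c /= ordS1 mpmul1. Qed.

Lemma ord01 : (ord0 : 'I_2) != ord_max. Proof. by []. Qed.

Section Crit.
Context (R : realFieldType) (A : mpmx R 2).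

Lemma arc_nodes x y : crit_arc A x y -> crit_node A x && crit_node A y.
Proof.
case/existsP => k /existsP [c /andP [Hcc /existsP [m /andP [/eqP Hx /eqP Hy]]]].
by apply/andP; split; apply/existsP; exists k; apply/existsP; exists c;
  rewrite Hcc /= -?Hx -?Hy mem_tnth.
Qed.

Lemma arc01 l : mcm A = Some l -> crit_arc A ord0 ord_max ->
  exists b0 c0, [/\ A ord0 ord_max = Some b0, A ord_max ord0 = Some c0 & b0 + c0 = l + l].
Proof.
move=> Hl /existsP [k /existsP [c /andP [Hcc /existsP [m /andP [/eqP Hx /eqP Hy]]]]].
move: c Hcc m Hx Hy; case: k => [[|[|k]] Hk] //= c Hcc m Hx Hy.
  by move: Hy; rewrite ordS1 Hx => /(congr1 val).
move: Hcc; rewrite /critical_cycle /is_cycle /cycle_mean Hl cw2.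
case: (ord2P m) => Em; subst m.
  move: Hy; rewrite (_ : ordS _ = ord_max); last exact: val_inj. move=> Hy.
  move=> /andP [/andP [_ Hw] /eqP E]; move: Hw E; rewrite Hx Hy.
  case: (A ord0 ord_max) => [b0|]; last by case: (A _ _) => [?|] /=; rewrite ?eqxx.
  case: (A ord_max ord0) => [c0|]; last by rewrite /= ?eqxx.
  by move=> _ /= [E]; exists b0, c0; split => //; lra.
move: Hy; rewrite (_ : ordS _ = ord0); last exact: val_inj. move=> Hy.
move=> /andP [/andP [_ Hw] /eqP E]; move: Hw E; rewrite Hx Hy.
case: (A ord0 ord_max) => [b0|]; last by case: (A _ _) => [?|] /=; rewrite ?eqxx.
case: (A ord_max ord0) => [c0|]; last by rewrite /= ?eqxx.
by move=> _ /= [E]; exists b0, c0; split => //; lra.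
Qed.

Lemma loop_le l x v : mcm A = Some l -> A x x = Some v -> v <= l.
Proof.
move=> Hl Hv.
have U : uniq [tuple x] by [].
have H1 : mpadd (cycle_mean A [tuple x])
   (\big[@mpadd R/None]_(c : 1.-tuple 'I_2 | uniq c) cycle_mean A c) =
   \big[@mpadd R/None]_(c : 1.-tuple 'I_2 | uniq c) cycle_mean A c.
  by apply: big_ub.
have H2 := @big_ub R 'I_2 xpredT (fun k : 'I_2 =>
   \big[@mpadd R/None]_(c : (k.+1).-tuple 'I_2 | uniq c) cycle_mean A c) ord0 isT.
change (mpadd (\big[@mpadd R/None]_(c : 1.-tuple 'I_2 | uniq c) cycle_mean A c) (mcm A) = mcm A) in H2.
have H3 : mpadd (cycle_mean A [tuple x]) (mcm A) = mcm A.
  by rewrite -{1}H2 mpaddA H1 H2.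
move: H3; rewrite Hl /cycle_mean cw1 /= Hv /= divr1 => -[] /max_idPr //.
Qed.

Lemma loop_crit l x : mcm A = Some l -> A x x = Some l -> crit_arc A x x.
Proof.
move=> Hl Hx; apply/existsP; exists ord0; apply/existsP; exists [tuple x].
apply/andP; split; last by apply/existsP; exists ord0; rewrite ordS1 /tnth /= eqxx.
by rewrite /critical_cycle /is_cycle /cycle_mean cw1 /= Hx Hl divr1 eqxx.
Qed.

Lemma girth_wit : crit_girth A = 2%N -> exists i,
  [&& crit_node A i, ~~ comp_has_cycle_len A i ord0 & comp_has_cycle_len A i ord_max].
Proof.
rewrite /crit_girth /comp_girth big2c !big2c.
case E0: (crit_node A ord0); case E1: (crit_node A ord_max);
case F00: (comp_has_cycle_len A ord0 ord0); case F01: (comp_has_cycle_len A ord0 ord_max);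
case F10: (comp_has_cycle_len A ord_max ord0);
case F11: (comp_has_cycle_len A ord_max ord_max) => //= _;
first [by exists ord0; rewrite E0 F00 F01 | by exists ord_max; rewrite E1 F10 F11].
Qed.

Lemma arcs_of_chcl i : comp_has_cycle_len A i ord_max ->
  crit_arc A ord0 ord_max && crit_arc A ord_max ord0.
Proof.
case/existsP => c /andP [/andP [Hu /forallP Ha] _].
have H0 := Ha ord0; have H1 := Ha ord_max.
rewrite ordS20 in H0; rewrite ordS21 in H1.
clear Ha; move: Hu H0 H1; case: c => [[|x [|y []]] //= Hs]; rewrite /tnth /= andbT inE.
case: (ord2P x) => ->; case: (ord2P y) => -> //= _ -> -> //.
Qed.

Lemma scc_all i j : crit_arc A ord0 ord_max -> crit_arc A ord_max ord0 -> crit_scc A i j.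
Proof.
move=> H01 H10; have /andP[N0 N1] := arc_nodes H01.
have Hn : forall k, crit_node A k by move=> k; case: (ord2P k) => ->.
have Hc : forall k k', connect (crit_arc A) k k'.
  by move=> k k'; case: (ord2P k) => ->; case: (ord2P k') => ->;
    rewrite ?connect0 //; apply: connect1.
by rewrite /crit_scc !Hn !Hc.
Qed.

Lemma chcl_loop i x : crit_arc A ord0 ord_max -> crit_arc A ord_max ord0 ->
  crit_arc A x x -> comp_has_cycle_len A i ord0.
Proof.
move=> H01 H10 Hxx; apply/existsP; exists [tuple x].
apply/andP; split.
  apply/andP; split => //.
  by apply/forallP => m; rewrite ordS1 (ord1 m).
by apply/existsP; exists ord0; apply: scc_all.
Qed.

Lemma chcl_full i : crit_arc A ord0 ord_max -> crit_arc A ord_max ord0 ->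
  comp_has_cycle_len A i ord_max.
Proof.
move=> H01 H10; apply/existsP; exists [tuple ord0; ord_max].
apply/andP; split.
  apply/andP; split => //.
  by apply/forallP => m; case: (ord2P m) => ->; rewrite ?ordS20 ?ordS21.
by apply/existsP; exists ord0; apply: scc_all.
Qed.

Lemma cyc2 : crit_arc A ord0 ord_max -> crit_arc A ord_max ord0 ->
  (forall x, ~~ crit_arc A x x) -> crit_cyclicity A = 2%N.
Proof.
move=> H01 H10 Hx.
have /andP[N0 N1] := arc_nodes H01.
have Hl : forall i, comp_has_cycle_len A i ord0 = false.
  move=> i; apply/negbTE/negP => /existsP [c /andP [/andP [_ /forallP Ha] _]].
  by have := Ha ord0; rewrite ordS1 (negbTE (Hx _)).
by rewrite /crit_cyclicity /comp_cyclicity big2c !big2c N0 N1 !Hl !chcl_full.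
Qed.

End Crit.

Lemma mpmuln (R : realFieldType) (x : mp R) : mpmul x None = None.
Proof. by case: x. Qed.

Lemma mulmx1 (R : realFieldType) (X : mpmx R 2) : mpmxmul X (@mpI R 2) = X.
Proof.
rewrite [X in mpmxmul X]mk2E I2 mul2 [RHS]mk2E.
by congr mk2; rewrite ?mpmul1 ?mpmuln ?mpaddn.
Qed.

Lemma mul0l (R : realFieldType) (X : mpmx R 2) :
  mpmxmul (mk2 None None None None) X = mk2 None None None None.
Proof. by rewrite [X]mk2E mul2. Qed.

Lemma addmx0 (R : realFieldType) (X : mpmx R 2) : mpmxadd X (mk2 None None None None) = X.
Proof.
apply: functional_extensionality => i; apply: functional_extensionality => j.
by rewrite /mpmxadd /mk2; case: ifP; case: ifP; rewrite mpaddn.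
Qed.

Lemma powB (R : realFieldType) t :
  mpmxpow (mk2 None None None None) t.+1 = mk2 None None None None :> mpmx R 2.
Proof. by rewrite /mpmxpow iterS mul0l. Qed.

Lemma powA (R : realFieldType) (a d : mp R) (b0 c0 l : R) (hbc : b0 + c0 = l + l)
  (ha : forall x, a = Some x -> x < l) (hd : forall x, d = Some x -> x < l) t :
  mpmxpow (mk2 a (Some b0) (Some c0) d) t.+2 = Aform a d b0 c0 l (odd t) ((t.+2)%:R * l).
Proof.
elim: t => [|t IH].
  by rewrite /mpmxpow !iterS /= (L5 hbc ha hd) mulr_natl mulr2n.
rewrite /mpmxpow iterS -/(mpmxpow _ _) IH (L1 hbc ha hd) /=.
by rewrite !mulr_natl [in RHS]mulrSr.
Qed.

Lemma powS (R : realFieldType) (b0 c0 l : R) (hbc : b0 + c0 = l + l) t :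
  mpmxpow (mk2 None (Some b0) (Some c0) None) t = Sform b0 c0 l (odd t) (t%:R * l).
Proof.
elim: t => [|t IH].
  by rewrite /mpmxpow /= I2 /Sform mul0r.
rewrite /mpmxpow iterS -/(mpmxpow _ _) IH (L2 hbc) /=.
by rewrite !mulr_natl [in RHS]mulrSr.
Qed.

Theorem propositionp (R : realFieldType) (A : mpmx R 2) :
  mcm A != None ->
  crit_girth A = 2%N ->
  (is_T1 A (DM 2 2) /\ DM 2 2 = 2%N) <-> A ord0 ord0 != A ord_max ord_max.
Proof.
move=> Hn0 Hg.
case Hl: (mcm A) Hn0 => [l|] // _.
have [i /and3P [Ni NC0 NC1]] := girth_wit Hg.
have /andP [H01 H10] := arcs_of_chcl NC1.
have [b0 [c0 [Hb Hc hbc]]] := arc01 Hl H01.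
have Nloop : forall x, ~~ crit_arc A x x.
  move=> x; apply/negP => Hxx.
  by rewrite (chcl_loop i H01 H10 Hxx) in NC0.
have hl : forall x v, A x x = Some v -> v < l.
  move=> x v Hv; rewrite lt_neqAle (loop_le Hl Hv) andbT; apply/negP => /eqP E.
  by subst v; move: (Nloop x); rewrite (loop_crit Hl Hv).
have ha := hl ord0; have hd := hl ord_max.
have Hcyc := cyc2 H01 H10 Nloop.
have /andP [N0 N1] := arc_nodes H01.
have Hn : forall k, crit_node A k by move=> k; case: (ord2P k) => ->.
have HA : A = mk2 (A ord0 ord0) (Some b0) (Some c0) (A ord_max ord_max).
  by rewrite [LHS]mk2E Hb Hc.
have HS : csr_S A = mk2 None (Some b0) (Some c0) None.
  rewrite [LHS]mk2E /csr_S (negbTE (Nloop ord0)) (negbTE (Nloop ord_max)).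
  by rewrite H01 H10 Hb Hc.
have Hnorm : mp_normalize A = An (A ord0 ord0) (A ord_max ord_max) b0 c0 l.
  rewrite [LHS]mk2E /mp_normalize Hl Hb Hc /An.
  by case: (A ord0 ord0) => [?|]; case: (A ord_max ord_max) => [?|].
have HN : csr_N A = Aform (A ord0 ord0) (A ord_max ord_max) b0 c0 l false 0.
  rewrite /csr_N Hcyc Hnorm /mpmxpow !iterS /=.
  exact: (L4 hbc ha hd).
have P1 : forall X : mpmx R 2, mpmxpow X (@ord_max 1) = X.
  by move=> X; exact: mulmx1.
have HM : csr_M A = Aform (A ord0 ord0) (A ord_max ord_max) b0 c0 l false 0.
  apply: functional_extensionality => i'; apply: functional_extensionality => j.
  rewrite /csr_M big2 P1 HN.
  rewrite /Aform /mk2 /mpmxpow /= /mpI.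
  by case: (ord2P i') => ->; case: (ord2P j) => -> //=; rewrite maxxx.
have HC : csr_C A = Aform (A ord0 ord0) (A ord_max ord_max) b0 c0 l false 0.
  apply: functional_extensionality => i'; apply: functional_extensionality => j.
  by rewrite /csr_C Hn HM.
have HR : csr_R A = Aform (A ord0 ord0) (A ord_max ord_max) b0 c0 l false 0.
  apply: functional_extensionality => i'; apply: functional_extensionality => j.
  by rewrite /csr_R Hn HM.
have HB : csr_B A = mk2 None None None None.
  apply: functional_extensionality => i'; apply: functional_extensionality => j.
  by rewrite /csr_B !Hn /mk2; case: ifP; case: ifP.
have HCSR : forall t, CSR A t =
    Aform (A ord0 ord0) (A ord_max ord_max) b0 c0 l (odd t) (t%:R * l).
  by move=> t; rewrite /CSR HC HR HS (powS hbc) (L3 hbc ha hd).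
have Hpow : forall t, mpmxpow A t.+2 =
    Aform (A ord0 ord0) (A ord_max ord_max) b0 c0 l (odd t) ((t.+2)%:R * l).
  by move=> t; have := powA hbc ha hd t; rewrite -HA.
have H2 : forall t, (2 <= t)%N -> csr_holds_at A t.
  case=> [|[|t]] // _.
  by rewrite /csr_holds_at HB powB addmx0 Hpow HCSR /= negbK.
have HP1 : mpmxpow A 1 = A by exact: mulmx1.
have H1 : csr_holds_at A 1 <-> A ord0 ord0 = A ord_max ord_max.
  rewrite /csr_holds_at HB powB addmx0 HCSR HP1; split.
    move=> E.
    have E1 := congr1 (fun M : mpmx R 2 => M ord0 ord0) E.
    have E2 := congr1 (fun M : mpmx R 2 => M ord_max ord_max) E.
    rewrite /= /Aform /mk2 /= in E1 E2.
    exact: (etrans E1 (esym E2)).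
  move=> Ead; rewrite {1}HA /Aform /= -Ead mpaddxx mul1r subrr mpmul1 !addrK.
  done.
have -> : DM 2 2 = 2%N by [].
split.
  case=> [[_ Hmin] _]; apply/negP => /eqP Ead.
  suff: (2 <= 1)%N by []. apply: Hmin.
  by case=> [|[|t]] // _; [apply/H1 | apply: H2].
move=> Hne; split => //; split; first exact: H2.
move=> T' HT'; rewrite leqNgt; apply/negP => hT.
have : csr_holds_at A 1 by apply: HT'; rewrite -ltnS.
by move/H1 => /eqP; rewrite (negbTE Hne).
Qed.
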